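(* Let $\varphi(t)$ be a geodesic of the $\dot H^1$-metric in $\operatorname{Diff}_{\mathcal A_1}(\mathbb R)$ with $\varphi(0)=\varphi_0$ and $\partial_t\varphi(0)=u_0\circ\varphi_0$ ($u_0\in\mathcal A_1(\mathbb R)$), and let $u(t)=\partial_t\varphi(t)\circ\varphi(t)^{-1}$. Then, for all $t$ in the interval of existence, $$\operatorname{Shift}(\varphi(t))=\operatorname{Shift}(\varphi_0)+t\,u_0(\infty)+\frac{t^2}{4}\int_{\mathbb R}(u_0')^2\,dx,\qquad u(t,\infty)=u_0(\infty)+t\int_{\mathbb R}(u_0')^2\,dx.$$ Consequently, if $u_0\neq0$, there are at most two times $t$ with $\varphi(t)\in\operatorname{Diff}_{\mathcal A}(\mathbb R)$, and at most one time $t$ at which $\varphi$ is tangent to a right coset of $\operatorname{Diff}_{\mathcal A}(\mathbb R)$ (i.e. $u(t,\infty)=0$). If moreover $\varphi_0,\varphi_1\in\operatorname{Diff}_{\mathcal A}(\mathbb R)$ and $\varphi(t)$, $t\in[0,1]$, is the geodesic in $\operatorname{Diff}_{\mathcal A_1}(\mathbb R)$ connecting them, then $$\operatorname{Shift}(\varphi(t))=\frac{t^2-t}{4}\|R(\varphi_0)-R(\varphi_1)\|_{L^2}^2=(t^2-t)\big\|\sqrt{\varphi_0'}-\sqrt{\varphi_1'}\big\|_{L^2}^2.$$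
   Context: $\mathcal A(\mathbb R)$ denotes any one of $C^\infty_c(\mathbb R)$, $\mathcal S(\mathbb R)$, $W^{\infty,1}(\mathbb R)$; $\mathcal A_1(\mathbb R)=\{x\mapsto\int_{-\infty}^xg\,dy: g\in\mathcal A(\mathbb R)\}$; $\operatorname{Diff}_{\mathcal A}(\mathbb R)=\{\mathrm{Id}+f: f\in\mathcal A(\mathbb R), f'>-1\}$ and $\operatorname{Diff}_{\mathcal A_1}(\mathbb R)=\{\mathrm{Id}+f: f\in\mathcal A_1(\mathbb R), f'>-1\}$, the latter with the right-invariant metric $G_\varphi(X\circ\varphi,Y\circ\varphi)=\int X'Y'\,dx$. For $\varphi\in\operatorname{Diff}_{\mathcal A_1}(\mathbb R)$, $\operatorname{Shift}(\varphi)=\lim_{x\to\infty}(\varphi(x)-x)$; $\varphi\in\operatorname{Diff}_{\mathcal A}(\mathbb R)$ iff $\operatorname{Shift}(\varphi)=0$, and right cosets $\operatorname{Diff}_{\mathcal A}(\mathbb R)\circ\psi$ are the level sets of $\operatorname{Shift}$. For $u\in\mathcal A_1(\mathbb R)$, $u(\infty)=\lim_{x\to\infty}u(x)$. $R(\varphi)=2((\varphi')^{1/2}-1)$. *)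

(* Defs.v *)
From Stdlib Require Export Reals.
Open Scope R_scope.

Definition derivs (f : R -> R) (D : nat -> R -> R) : Prop :=
  (forall x, D 0%nat x = f x) /\
  (forall (n : nat) (x : R), derivable_pt_lim (D n) x (D (S n) x)).

(* int_{-oo}^{+oo} |g| <= eps  (for continuous g: every finite piece is <= eps) *)
Definition int_abs_le (g : R -> R) (eps : R) : Prop :=
  forall a b, a <= b ->
    forall pr : Riemann_integrable (fun x => Rabs (g x)) a b, RiemannInt pr <= eps.

Definition integral_R (f : R -> R) (l : R) : Prop :=
  forall eps, eps > 0 -> exists M, M > 0 /\
    forall a b, a <= - M -> M <= b ->
      exists pr : Riemann_integrable f a b, Rabs (RiemannInt pr - l) < eps.

Definition integral_minf (g : R -> R) (x l : R) : Prop :=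
  forall eps, eps > 0 -> exists M,
    forall a, a <= M -> a <= x ->
      exists pr : Riemann_integrable g a x, Rabs (RiemannInt pr - l) < eps.

Definition lim_pinf (f : R -> R) (l : R) : Prop :=
  forall eps, eps > 0 -> exists M, forall x, x >= M -> Rabs (f x - l) < eps.

Definition has_shift (phi : R -> R) (s : R) : Prop :=
  lim_pinf (fun x => phi x - x) s.

(* The three admissible choices of A(R): C_c^oo, Schwartz S, W^{oo,1}. *)
Inductive Aclass : Type := Cc | Schwartz | Winf1.

Definition inA (A : Aclass) (f : R -> R) : Prop :=
  exists D, derivs f D /\
  match A with
  | Cc => exists K, forall x, K < Rabs x -> f x = 0
  | Schwartz => forall j k : nat, exists C, forall x, Rabs (x ^ j * D k x) <= C
  | Winf1 => forall k : nat, exists C, int_abs_le (D k) C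
  end.

Definition inA1 (A : Aclass) (f : R -> R) : Prop :=
  exists g, inA A g /\ forall x, integral_minf g x (f x).

Definition inDiffA (A : Aclass) (phi : R -> R) : Prop :=
  exists f, inA A f /\ (forall x, phi x = x + f x) /\
    (forall x, exists l, derivable_pt_lim f x l /\ l > -1).

Definition inDiffA1 (A : Aclass) (phi : R -> R) : Prop :=
  exists f, inA1 A f /\ (forall x, phi x = x + f x) /\
    (forall x, exists l, derivable_pt_lim f x l /\ l > -1).

(* The defining seminorms of the Frechet topology of A(R), applied to a
   function given by its derivative sequence q (index k: derivative order,
   j: weight x^j for Schwartz). "seminorm_{k,j}(q) <= eps". *)
Definition snle (A : Aclass) (k j : nat) (q : nat -> R -> R) (eps : R) : Prop :=
  match A with
  | Cc => forall x, Rabs (q k x) <= eps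
  | Schwartz => forall x, Rabs (x ^ j * q k x) <= eps
  | Winf1 => int_abs_le (q k) eps
  end.

(* C m t k x = d_t^m d_x^k c(t)(x).  For C_c^oo (an LF space) smooth
   curves are those which locally have support in a fixed compact set and are
   smooth into that step (convenient calculus). *)
Definition smooth_curve_A (A : Aclass) (J : R -> Prop)
    (C : nat -> R -> nat -> R -> R) : Prop :=
  (forall m t, J t -> derivs (C m t 0%nat) (C m t) /\ inA A (C m t 0%nat)) /\
  (forall m t, J t -> forall (k j : nat) eps, eps > 0 -> exists delta, delta > 0 /\
     forall h, h <> 0 -> Rabs h < delta -> J (t + h) ->
       snle A k j (fun k' x => (C m (t + h) k' x - C m t k' x) / h - C (S m) t k' x) eps) /\
  (A = Cc -> forall t, J t -> exists delta K, delta > 0 /\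
     forall s x, J s -> Rabs (s - t) < delta -> K < Rabs x -> C 0%nat s 0%nat x = 0).

(* Geodesic of the right-invariant H^1-dot metric G_phi(h,k) = int h' k' / phi'
   in Diff_{A_1}(R), on the time interval J.
   - phi(t) in Diff_{A_1} for t in J;
   - t |-> phi(t) - Id is a smooth curve in A_1(R); A_1 carries the topology
     transported from A(R) by the isomorphism f |-> f', so this means that
     t |-> phi(t)' - 1 is a smooth curve C in A(R);
   - the geodesic equation phi_tt = Gamma_phi(phi_t, phi_t) (Euler-Lagrange
     equation of the energy 1/2 int phi_tx^2/phi_x dx; equivalently the
     Hunter-Saxton equation for u = phi_t o phi^{-1}), written after applying
     the isomorphism d_x : A_1 -> A:  phi_ttx = 1/2 phi_tx^2 / phi_x. *)
Definition is_geodesic (A : Aclass) (J : R -> Prop) (phi : R -> R -> R) : Prop :=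
  exists C : nat -> R -> nat -> R -> R,
    smooth_curve_A A J C /\
    (forall t, J t -> inDiffA1 A (phi t)) /\
    (forall t x, J t -> derivable_pt_lim (phi t) x (1 + C 0%nat t 0%nat x)) /\
    (forall t x, J t ->
       C 2%nat t 0%nat x = / 2 * (C 1%nat t 0%nat x) ^ 2 / (1 + C 0%nat t 0%nat x)).

Definition deriv_in (J : R -> Prop) (f : R -> R) (t l : R) : Prop :=
  forall eps, eps > 0 -> exists delta, delta > 0 /\
    forall h, h <> 0 -> Rabs h < delta -> J (t + h) ->
      Rabs ((f (t + h) - f t) / h - l) < eps.

(* R(phi) = 2 ((phi')^{1/2} - 1), as a function of the value phi'(x) *)
Definition Rmap (dphi : R) : R := 2 * (sqrt dphi - 1).

(* Main.v *)
Require Import Defs.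
From Stdlib Require Import Reals Lra Psatz.
From Coquelicot Require Import Coquelicot.
Open Scope R_scope.


Lemma cont_of_deriv (f f1 : R -> R) :
  (forall y, derivable_pt_lim f y (f1 y)) -> forall y, continuous f y.
Proof. intros H y. apply (ex_derive_continuous (K:=R_AbsRing) (V:=R_NormedModule) f y). exists (f1 y). now apply is_derive_Reals. Qed.

Lemma cont_pt_of (f : R -> R) x : continuous f x -> continuity_pt f x.
Proof. intros H. now apply continuity_pt_filterlim. Qed.

Lemma exRInt_cont (f : R -> R) a b : (forall y, continuous f y) -> ex_RInt f a b.
Proof. intros H. apply (ex_RInt_continuous (V:=R_CompleteNormedModule)). intros; apply H. Qed.

Lemma int_abs_le_RInt g eps : int_abs_le g eps -> (forall y, continuous g y) ->
  forall a b, a <= b -> RInt (fun y => Rabs (g y)) a b <= eps.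
Proof.
  intros H Hc a b Hab.
  assert (pr : Riemann_integrable (fun x => Rabs (g x)) a b).
  { apply continuity_implies_RiemannInt; auto. intros x _.
    apply cont_pt_of. apply continuous_Rabs_comp. apply Hc. }
  rewrite (RInt_Reals _ _ _ pr). apply H; auto.
Qed.

Lemma sup_bound (q q1 : R -> R) :
  (forall y, derivable_pt_lim q y (q1 y)) -> (forall y, continuous q1 y) ->
  forall x, Rabs (q x) <= RInt (fun y => Rabs (q y)) (x-1) x + RInt (fun y => Rabs (q1 y)) (x-1) x.
Proof.
  intros Hd Hc x.
  assert (Hq : forall y, continuous q y) by (apply (cont_of_deriv _ _ Hd)).
  set (K := RInt (fun y => Rabs (q1 y)) (x-1) x).
  assert (Hy : forall y, x - 1 <= y <= x -> Rabs (q x) - K <= Rabs (q y)).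
  { intros y Hy.
    assert (E1 : RInt q1 y x = q x - q y).
    { apply is_RInt_unique. apply (is_RInt_derive q q1).
      - intros; apply is_derive_Reals; apply Hd.
      - intros; apply Hc. }
    assert (E2 : Rabs (RInt q1 y x) <= RInt (fun t => Rabs (q1 t)) y x).
    { apply abs_RInt_le. lra. apply exRInt_cont; auto. }
    assert (E3 : RInt (fun t => Rabs (q1 t)) (x-1) y + RInt (fun t => Rabs (q1 t)) y x = K).
    { apply (RInt_Chasles (fun t => Rabs (q1 t))); apply exRInt_cont; intros; apply continuous_Rabs_comp; auto. }
    assert (E4 : 0 <= RInt (fun t => Rabs (q1 t)) (x-1) y).
    { apply RInt_ge_0. lra. apply exRInt_cont; intros; apply continuous_Rabs_comp; auto.
      intros; apply Rabs_pos. }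
    rewrite E1 in E2.
    assert (Rabs (q x) <= Rabs (q y) + Rabs (q x - q y)).
    { replace (q x) with (q y + (q x - q y)) at 1 by ring. apply Rabs_triang. }
    lra. }
  assert (HI : RInt (fun _ => Rabs (q x) - K) (x-1) x <= RInt (fun y => Rabs (q y)) (x-1) x).
  { apply RInt_le. lra. apply ex_RInt_const.
    apply exRInt_cont; intros; apply continuous_Rabs_comp; auto.
    intros; apply Hy; lra. }
  rewrite RInt_const in HI. unfold scal in HI; simpl in HI. unfold mult in HI; simpl in HI.
  lra.
Qed.


Lemma dlim_lin (a b c : R->R) a1 b1 c1 h y :
  derivable_pt_lim a y a1 -> derivable_pt_lim b y b1 -> derivable_pt_lim c y c1 ->
  derivable_pt_lim (fun z => (a z - b z)/h - c z) y ((a1-b1)/h - c1).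
Proof.
  intros Ha Hb Hc.
  assert (H := derivable_pt_lim_minus _ _ y _ _
     (derivable_pt_lim_mult _ _ y _ _ (derivable_pt_lim_minus _ _ y _ _ Ha Hb)
        (derivable_pt_lim_const (/h) y)) Hc).
  replace ((a1-b1)/h - c1) with ((a1 - b1) * (fun _ : R => / h) y + (a y - b y) * 0 - c1)
    by (simpl; unfold Rdiv; ring).
  exact H.
Qed.

Lemma curve_pt A J C : smooth_curve_A A J C ->
  forall m t x, J t -> deriv_in J (fun s => C m s 0%nat x) t (C (S m) t 0%nat x).
Proof.
  intros [H1 [H2 _]] m t x Jt eps Heps.
  destruct A.
  - destruct (H2 m t Jt 0%nat 0%nat (eps/2)) as [d [Hd Hq]]; [lra|].
    exists d; split; auto. intros h Hh Hhd Jth.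
    specialize (Hq h Hh Hhd Jth x). simpl in Hq. lra.
  - destruct (H2 m t Jt 0%nat 0%nat (eps/2)) as [d [Hd Hq]]; [lra|].
    exists d; split; auto. intros h Hh Hhd Jth.
    specialize (Hq h Hh Hhd Jth x). simpl in Hq. rewrite Rmult_1_l in Hq. lra.
  - destruct (H2 m t Jt 0%nat 0%nat (eps/3)) as [d0 [Hd0 Hq0]]; [lra|].
    destruct (H2 m t Jt 1%nat 0%nat (eps/3)) as [d1 [Hd1 Hq1]]; [lra|].
    exists (Rmin d0 d1); split. { apply Rmin_glb_lt; auto. }
    intros h Hh Hhd Jth.
    assert (Hhd0 : Rabs h < d0) by (eapply Rlt_le_trans; [exact Hhd| apply Rmin_l]).
    assert (Hhd1 : Rabs h < d1) by (eapply Rlt_le_trans; [exact Hhd| apply Rmin_r]).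
    specialize (Hq0 h Hh Hhd0 Jth). specialize (Hq1 h Hh Hhd1 Jth). simpl in Hq0, Hq1.
    destruct (H1 m (t+h) Jth) as [[_ Da] _].
    destruct (H1 m t Jt) as [[_ Db] _].
    destruct (H1 (S m) t Jt) as [[_ Dc] _].
    set (q := fun k y => (C m (t + h) k y - C m t k y) / h - C (S m) t k y).
    assert (Hd : forall y, derivable_pt_lim (q 0%nat) y (q 1%nat y)).
    { intros y. unfold q. apply dlim_lin; auto. }
    assert (Hdd1 : forall y, derivable_pt_lim (q 1%nat) y (q 2%nat y)).
    { intros y. unfold q. apply dlim_lin; auto. }
    assert (Hc1 := cont_of_deriv _ _ Hdd1).
    assert (Hc0 := cont_of_deriv _ _ Hd).
    assert (B := sup_bound _ _ Hd Hc1 x).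
    assert (B0 := int_abs_le_RInt _ _ Hq0 Hc0 (x-1) x ltac:(lra)).
    assert (B1 := int_abs_le_RInt _ _ Hq1 Hc1 (x-1) x ltac:(lra)).
    unfold q in B, B0, B1. lra.
Qed.


Lemma null_open a b f : (forall t, a < t < b -> derivable_pt_lim f t 0) ->
  forall t s, a < t < b -> a < s < b -> f t = f s.
Proof.
  intros H t s Ht Hs.
  destruct (MVT_gen f s t (fun _ => 0)) as [c [_ Hc]].
  - intros x Hx. apply is_derive_Reals. apply H.
    unfold Rmin, Rmax in Hx; destruct (Rle_dec s t); lra.
  - intros x Hx. apply derivable_continuous_pt. exists 0. apply H.
    unfold Rmin, Rmax in Hx; destruct (Rle_dec s t); lra.
  - lra.
Qed.

Lemma null_all f : (forall t, derivable_pt_lim f t 0) -> forall t s, f t = f s.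
Proof.
  intros H t s. apply (null_open (Rmin t s - 1) (Rmax t s + 1)).
  intros; apply H.
  all: unfold Rmin, Rmax; destruct (Rle_dec t s); lra.
Qed.

Lemma ode a b (c c1 c2 : R -> R) :
  (forall t, a < t < b -> derivable_pt_lim c t (c1 t)) ->
  (forall t, a < t < b -> derivable_pt_lim c1 t (c2 t)) ->
  (forall t, a < t < b -> c2 t = / 2 * (c1 t) ^ 2 / (1 + c t)) ->
  (forall t, a < t < b -> 0 < 1 + c t) ->
  forall t0, a < t0 < b -> exists k, forall t, a < t < b ->
    sqrt (1 + c t) = sqrt (1 + c t0) + (t - t0) * k.
Proof.
  intros Hc Hc1 Heq Hpos t0 Ht0.
  assert (Ds : forall t, a < t < b -> derivable_pt_lim (fun t => sqrt (1 + c t)) t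
            (c1 t / (2 * sqrt (1 + c t)))).
  { intros t Ht.
    assert (H := derivable_pt_lim_comp (fun t => 1 + c t) sqrt t (0 + c1 t) _
       (derivable_pt_lim_plus _ _ t _ _ (derivable_pt_lim_const 1 t) (Hc t Ht))
       (derivable_pt_lim_sqrt _ (Hpos t Ht))).
    replace (c1 t / (2 * sqrt (1 + c t))) with (/ (2 * sqrt (1 + c t)) * (0 + c1 t))
      by (unfold Rdiv; ring).
    exact H. }
  assert (Dg : forall t, a < t < b -> derivable_pt_lim (fun t => c1 t / sqrt (1 + c t)) t 0).
  { intros t Ht.
    assert (Hs : 0 < sqrt (1 + c t)) by (apply sqrt_lt_R0; auto).
    assert (Hs2 : sqrt (1 + c t) * sqrt (1 + c t) = 1 + c t) by (apply sqrt_sqrt; specialize (Hpos t Ht); lra).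
    assert (H := derivable_pt_lim_div c1 (fun t => sqrt (1 + c t)) t _ _ (Hc1 t Ht) (Ds t Ht)
                  ltac:(lra)).
    match type of H with derivable_pt_lim _ _ ?L => replace 0 with L end.
    exact H.
    rewrite (Heq t Ht). unfold Rsqr. set (S := sqrt (1 + c t)) in *. rewrite <- Hs2.
    field. lra. }
  exists (c1 t0 / sqrt (1 + c t0) / 2).
  intros t Ht.
  set (h := fun t => sqrt (1 + c t) - (t - t0) * (c1 t0 / sqrt (1 + c t0) / 2)).
  assert (Dh : forall t, a < t < b -> derivable_pt_lim h t 0).
  { intros s Hs. unfold h.
    assert (Hss : 0 < sqrt (1 + c s)) by (apply sqrt_lt_R0; auto).
    assert (E : c1 s / sqrt (1 + c s) = c1 t0 / sqrt (1 + c t0)).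
    { apply (null_open a b (fun t => c1 t / sqrt (1 + c t))); auto. }
    assert (H := derivable_pt_lim_minus _ _ s _ _ (Ds s Hs)
       (derivable_pt_lim_mult _ _ s _ _
          (derivable_pt_lim_minus _ _ s _ _ (derivable_pt_lim_id s) (derivable_pt_lim_const t0 s))
          (derivable_pt_lim_const (c1 t0 / sqrt (1 + c t0) / 2) s))).
    match type of H with derivable_pt_lim _ _ ?L => replace 0 with L end.
    exact H.
    cbv beta. rewrite <- E. unfold fct_cte, minus_fct, id. field. lra. }
  assert (E := null_open a b h Dh t t0 Ht Ht0).
  unfold h in E. replace (t0 - t0) with 0 in E by ring. lra.
Qed.


Lemma dlim_ext f g x l : (forall y, f y = g y) -> derivable_pt_lim f x l -> derivable_pt_lim g x l.
Proof. intros E H eps He. destruct (H eps He) as [d Hd]. exists d. intros h Hh Hhd.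
  rewrite <- !E. auto. Qed.

Lemma small_zero z : (forall eps, eps > 0 -> Rabs z < eps) -> z = 0.
Proof. intros H. destruct (Req_dec z 0); auto. assert (Rabs z > 0) by (apply Rabs_pos_lt; auto).
  specialize (H _ H1). lra. Qed.

Lemma deriv_in_int (J : R -> Prop) f t l r : 0 < r -> (forall s, Rabs (s - t) < r -> J s) ->
  deriv_in J f t l -> derivable_pt_lim f t l.
Proof.
  intros Hr HJ H eps He. destruct (H eps He) as [d [Hd Hq]].
  assert (Hm : 0 < Rmin d r) by (apply Rmin_glb_lt; auto).
  exists (mkposreal _ Hm). simpl. intros h Hh Hhd.
  apply Hq; auto. eapply Rlt_le_trans; [exact Hhd| apply Rmin_l].
  apply HJ. replace (t + h - t) with h by ring. eapply Rlt_le_trans; [exact Hhd| apply Rmin_r].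
Qed.

Lemma deriv_in_cont (J : R -> Prop) f t l : deriv_in J f t l ->
  forall eps, eps > 0 -> exists d, d > 0 /\ forall h, Rabs h < d -> J (t + h) ->
    Rabs (f (t + h) - f t) < eps.
Proof.
  intros H eps He. destruct (H 1 ltac:(lra)) as [d [Hd Hq]].
  assert (Hl : 0 < Rabs l + 1) by (pose proof (Rabs_pos l); lra).
  exists (Rmin d (eps / (Rabs l + 1))). split.
  { apply Rmin_glb_lt; auto. apply Rdiv_lt_0_compat; lra. }
  intros h Hh Jh.
  destruct (Req_dec h 0) as [->|Hn].
  { rewrite Rplus_0_r, Rminus_diag, Rabs_R0; lra. }
  assert (Hh1 : Rabs h < d) by (eapply Rlt_le_trans; [exact Hh| apply Rmin_l]).
  assert (Hh2 : Rabs h < eps / (Rabs l + 1)) by (eapply Rlt_le_trans; [exact Hh| apply Rmin_r]).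
  specialize (Hq h Hn Hh1 Jh).
  set (Q := (f (t + h) - f t) / h) in *.
  assert (E : f (t + h) - f t = h * Q) by (unfold Q; field; auto).
  rewrite E, Rabs_mult.
  assert (Rabs Q <= Rabs l + 1).
  { replace Q with (l + (Q - l)) by ring.
    eapply Rle_trans; [apply Rabs_triang|]. lra. }
  assert (Rabs h * (Rabs l + 1) < eps).
  { apply (Rmult_lt_compat_r (Rabs l + 1)) in Hh2; auto.
    unfold Rdiv in Hh2. rewrite Rmult_assoc, Rinv_l in Hh2; lra. }
  pose proof (Rabs_pos h). pose proof (Rabs_pos Q). nra.
Qed.




Lemma inA_reg A g : inA A g -> exists g1, (forall x, derivable_pt_lim g x (g1 x)) /\ (forall x, continuous g1 x).
Proof.
  intros [D [[D0 HD] _]]. exists (D 1%nat). split.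
  - intros x. apply (dlim_ext (D 0%nat)); auto.
  - apply (cont_of_deriv _ (D 2%nat)). intros; apply HD.
Qed.

Lemma inA_cont A g : inA A g -> forall x, continuous g x.
Proof. intros H. destruct (inA_reg A g H) as [g1 [Hd _]]. exact (cont_of_deriv _ _ Hd). Qed.

Lemma contRabs g : (forall x, continuous g x) -> forall x, @continuous R_UniformSpace R_UniformSpace (fun y => Rabs (g y)) x.
Proof. intros H x. apply continuous_Rabs_comp. auto. Qed.

Lemma RInt_nonneg_mono h a b c : (forall x, continuous h x) -> (forall x, 0 <= h x) -> a <= b <= c ->
  RInt h a b <= RInt h a c.
Proof.
  intros Hc Hp Habc.
  rewrite <- (RInt_Chasles (V:=R_CompleteNormedModule) h a b c); try apply exRInt_cont; auto.
  assert (0 <= RInt h b c). { apply RInt_ge_0. lra. apply exRInt_cont; auto. intros; auto. }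
  simpl. unfold plus; simpl. lra.
Qed.

Lemma RInt_Chasles' h a b c : (forall x, continuous h x) -> RInt h a c - RInt h a b = RInt h b c.
Proof.
  intros Hc.
  rewrite <- (RInt_Chasles (V:=R_CompleteNormedModule) h a b c); try apply exRInt_cont; auto.
  simpl. unfold plus; simpl. ring.
Qed.

Lemma tail_pinf h K : (forall x, continuous h x) -> (forall x, 0 <= h x) ->
  (forall a b, a <= b -> RInt h a b <= K) ->
  forall eps, eps > 0 -> exists M, forall a b, M <= a <= b -> RInt h a b < eps.
Proof.
  intros Hc Hp HK eps He.
  set (E := fun v => exists x, 0 <= x /\ v = RInt h 0 x).
  destruct (completeness E) as [L [HL1 HL2]].
  { exists K. intros v [x [Hx ->]]. apply HK; auto. }
  { exists (RInt h 0 0). exists 0. split; auto; lra. }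
  assert (Hx0 : exists x0, 0 <= x0 /\ RInt h 0 x0 > L - eps).
  { destruct (Classical_Prop.classic (exists x0, 0 <= x0 /\ RInt h 0 x0 > L - eps)) as [H|H]; auto.
    exfalso. assert (L <= L - eps); [|lra]. apply HL2. intros v [x [Hx ->]].
    destruct (Rle_dec (RInt h 0 x) (L - eps)); auto. exfalso. apply H. exists x. split; auto. lra. }
  destruct Hx0 as [x0 [Hx0 Hx0L]].
  exists x0. intros a b Hab.
  rewrite <- (RInt_Chasles' h 0 a b Hc).
  assert (RInt h 0 b <= L) by (apply HL1; exists b; split; auto; lra).
  assert (RInt h 0 x0 <= RInt h 0 a) by (apply RInt_nonneg_mono; auto; lra).
  lra.
Qed.

Lemma tail_minf h K : (forall x, continuous h x) -> (forall x, 0 <= h x) ->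
  (forall a b, a <= b -> RInt h a b <= K) ->
  forall eps, eps > 0 -> exists M, forall a b, a <= b <= M -> RInt h a b < eps.
Proof.
  intros Hc Hp HK eps He.
  set (E := fun v => exists x, x <= 0 /\ v = RInt h x 0).
  destruct (completeness E) as [L [HL1 HL2]].
  { exists K. intros v [x [Hx ->]]. apply HK; auto. }
  { exists (RInt h 0 0). exists 0. split; auto; lra. }
  assert (Hx0 : exists x0, x0 <= 0 /\ RInt h x0 0 > L - eps).
  { destruct (Classical_Prop.classic (exists x0, x0 <= 0 /\ RInt h x0 0 > L - eps)) as [H|H]; auto.
    exfalso. assert (L <= L - eps); [|lra]. apply HL2. intros v [x [Hx ->]].
    destruct (Rle_dec (RInt h x 0) (L - eps)); auto. exfalso. apply H. exists x. split; auto. lra. }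
  destruct Hx0 as [x0 [Hx0 Hx0L]].
  exists x0. intros a b Hab.
  assert (E1 : RInt h a b = RInt h a 0 - RInt h b 0).
  { pose proof (RInt_Chasles' h a b 0 Hc); lra. }
  rewrite E1.
  assert (RInt h a 0 <= L) by (apply HL1; exists a; split; auto; lra).
  assert (RInt h x0 0 <= RInt h b 0).
  { pose proof (RInt_Chasles' h b x0 0 Hc).
    assert (0 <= RInt h b x0). { apply RInt_ge_0. lra. apply exRInt_cont; auto. intros; auto. }
    lra. }
  lra.
Qed.


Lemma cont_lor C : forall x, @continuous R_UniformSpace R_UniformSpace (fun y => C * / (1 + y ^ 2)) x.
Proof.
  intros x. apply (ex_derive_continuous (K:=R_AbsRing) (V:=R_NormedModule)).
  auto_derive. nra.
Qed.

Lemma lor_bound g C : (forall x, continuous g x) -> (forall x, (1 + x ^ 2) * Rabs (g x) <= C) ->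
  forall a b, a <= b -> RInt (fun y => Rabs (g y)) a b <= C * PI.
Proof.
  intros Hc HC a b Hab.
  assert (C0 : 0 <= C). { specialize (HC 0). pose proof (Rabs_pos (g 0)). simpl in HC. nra. }
  assert (I : RInt (fun y => C * / (1 + y ^ 2)) a b = C * atan b - C * atan a).
  { apply is_RInt_unique. apply (is_RInt_derive (fun y => C * atan y)).
    - intros x _. apply is_derive_Reals.
      apply (derivable_pt_lim_scal atan C x). apply derivable_pt_lim_atan.
    - intros x _. apply cont_lor. }
  assert (L : RInt (fun y => Rabs (g y)) a b <= RInt (fun y => C * / (1 + y ^ 2)) a b).
  { apply RInt_le; auto. apply exRInt_cont; apply contRabs; auto. apply exRInt_cont; apply cont_lor.
    intros x _. specialize (HC x). assert (0 < 1 + x ^ 2) by nra.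
    apply (Rmult_le_reg_l (1 + x ^ 2)); auto. field_simplify; lra. }
  rewrite I in L. pose proof (atan_bound a). pose proof (atan_bound b). nra.
Qed.

Lemma A_L1 A g : inA A g -> exists K, forall a b, a <= b -> RInt (fun y => Rabs (g y)) a b <= K.
Proof.
  intros HA. assert (Hc := inA_cont A g HA).
  destruct HA as [D [[D0 HD] HB]]. destruct A.
  - destruct HB as [K HK].
    destruct (continuity_ab_maj (fun y => Rabs (g y)) (- Rabs K) (Rabs K)) as [m [Hm _]].
    { pose proof (Rabs_pos K); lra. }
    { intros; apply cont_pt_of; apply contRabs; auto. }
    exists ((1 + K ^ 2) * Rabs (g m) * PI). intros a b Hab.
    apply lor_bound; auto. intros x.
    destruct (Rle_dec (Rabs x) (Rabs K)).
    + assert (Rabs (g x) <= Rabs (g m)) by (apply Hm; apply Rabs_le_between; auto).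
      assert (x ^ 2 <= K ^ 2).
      { rewrite <- (pow2_abs x), <- (pow2_abs K). pose proof (Rabs_pos x). nra. }
      pose proof (Rabs_pos (g x)). nra.
    + rewrite (HK x) by (pose proof (Rle_abs K); lra). rewrite Rabs_R0, Rmult_0_r.
      pose proof (Rabs_pos (g m)). assert (0 <= K^2) by nra. pose proof PI_RGT_0.
      assert (0 <= (1+K^2)*Rabs (g m)) by nra. nra.
  - destruct (HB 0%nat 0%nat) as [C0 HC0]. destruct (HB 2%nat 0%nat) as [C2 HC2].
    exists ((C0 + C2) * PI). apply lor_bound; auto. intros x.
    specialize (HC0 x). specialize (HC2 x). rewrite D0 in HC0, HC2.
    assert (E0 : Rabs (x ^ 0 * g x) = Rabs (g x)) by (f_equal; simpl; ring).
    assert (E2 : Rabs (x ^ 2 * g x) = x ^ 2 * Rabs (g x)).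
    { rewrite Rabs_mult. f_equal. apply Rabs_pos_eq. nra. }
    rewrite E0 in HC0. rewrite E2 in HC2. nra.
  - destruct (HB 0%nat) as [C HC]. exists C. intros a b Hab.
    rewrite (RInt_ext (fun y => Rabs (g y)) (fun y => Rabs (D 0%nat y))) by (intros; rewrite D0; auto).
    apply int_abs_le_RInt; auto. intros y. apply (continuous_ext g); auto.
Qed.


Lemma RInt_add p q a b : (forall x, continuous p x) -> (forall x, continuous q x) ->
  RInt (fun y => p y + q y) a b = RInt p a b + RInt q a b.
Proof.
  intros Hp Hq. apply (RInt_plus (V:=R_CompleteNormedModule) p q a b); apply exRInt_cont; auto.
Qed.

Lemma RInt_of_pr g a b (pr : Riemann_integrable g a b) : RiemannInt pr = RInt g a b.
Proof. symmetry. apply RInt_Reals. Qed.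

Lemma A1_minf A f : inA1 A f -> forall eps, eps > 0 -> exists M, forall x, x <= M -> Rabs (f x) < eps.
Proof.
  intros [g [HA Hg]] eps He.
  assert (Hc := inA_cont A g HA). destruct (A_L1 A g HA) as [K HK].
  destruct (tail_minf _ K (contRabs g Hc) (fun x => Rabs_pos (g x)) HK (eps/2) ltac:(lra)) as [M0 HM0].
  exists M0. intros x Hx.
  destruct (Hg x (eps/2) ltac:(lra)) as [M' HM'].
  destruct (HM' (Rmin M' x) (Rmin_l _ _) (Rmin_r _ _)) as [pr Hpr].
  rewrite RInt_of_pr in Hpr.
  assert (Rabs (RInt g (Rmin M' x) x) <= RInt (fun t => Rabs (g t)) (Rmin M' x) x).
  { apply abs_RInt_le. apply Rmin_r. apply exRInt_cont; auto. }
  assert (RInt (fun t => Rabs (g t)) (Rmin M' x) x < eps/2).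
  { apply HM0. split; auto. apply Rmin_r. }
  replace (f x) with (- (RInt g (Rmin M' x) x - f x) + RInt g (Rmin M' x) x) by ring.
  eapply Rle_lt_trans; [apply Rabs_triang|]. rewrite Rabs_Ropp. lra.
Qed.

Lemma A1_diff A f : inA1 A f -> exists g, (forall y, continuous g y) /\ forall x y, f x - f y = RInt g y x.
Proof.
  intros [g [HA Hg]]. exists g. assert (Hc := inA_cont A g HA). split; auto.
  intros x y. apply Rminus_diag_uniq. apply small_zero. intros eps He.
  destruct (Hg x (eps/2) ltac:(lra)) as [Mx HMx].
  destruct (Hg y (eps/2) ltac:(lra)) as [My HMy].
  set (a := Rmin (Rmin Mx My) (Rmin x y)).
  assert (a <= Mx /\ a <= My /\ a <= x /\ a <= y) as [A1 [A2 [A3 A4]]].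
  { unfold a. pose proof (Rmin_l (Rmin Mx My) (Rmin x y)). pose proof (Rmin_r (Rmin Mx My) (Rmin x y)).
    pose proof (Rmin_l Mx My). pose proof (Rmin_r Mx My). pose proof (Rmin_l x y). pose proof (Rmin_r x y).
    repeat split; lra. }
  destruct (HMx a A1 A3) as [prx Hx]. destruct (HMy a A2 A4) as [pry Hy].
  rewrite RInt_of_pr in Hx, Hy.
  pose proof (RInt_Chasles' g a y x Hc).
  rewrite <- H.
  replace (f x - f y - (RInt g a x - RInt g a y)) with (- (RInt g a x - f x) + (RInt g a y - f y)) by ring.
  eapply Rle_lt_trans; [apply Rabs_triang|]. rewrite Rabs_Ropp. lra.
Qed.

Lemma A1_dcont A f df : inA1 A f -> (forall x, derivable_pt_lim f x (df x)) -> forall x, continuous df x.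
Proof.
  intros HA Hd x0. destruct (A1_diff A f HA) as [g [Hc Hfg]].
  assert (E : forall x, g x = df x).
  { intros x. symmetry. apply (uniqueness_limite f x); auto.
    apply (dlim_ext (fun b => f 0 + RInt g 0 b)).
    { intros b. rewrite <- (Hfg b 0). ring. }
    assert (D : derivable_pt_lim (fun b => RInt g 0 b) x (g x)).
    { apply is_derive_Reals. apply (is_derive_RInt g (fun b => RInt g 0 b) 0 x); auto.
      apply filter_forall. intros b. apply (RInt_correct (V:=R_CompleteNormedModule)).
      apply exRInt_cont; auto. }
    replace (g x) with (0 + g x) by ring.
    exact (derivable_pt_lim_plus (fun _ => f 0) _ x _ _ (derivable_pt_lim_const (f 0) x) D). }
  apply (continuous_ext g); auto.
Qed.

Lemma A_pinf A f : inA A f -> lim_pinf f 0.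
Proof.
  intros HA. assert (Hc := inA_cont A f HA).
  destruct HA as [D [[D0 HD] HB]]. destruct A.
  - destruct HB as [K HK]. intros eps He. exists (Rabs K + 1). intros x Hx.
    rewrite Rminus_0_r, HK. rewrite Rabs_R0; lra.
    pose proof (Rle_abs K). rewrite Rabs_pos_eq; [lra|]. pose proof (Rabs_pos K); lra.
  - destruct (HB 1%nat 0%nat) as [C HC]. intros eps He.
    assert (C0 : 0 <= C) by (specialize (HC 0); pose proof (Rabs_pos (0 ^ 1 * D 0%nat 0)); lra).
    exists (C / eps + 1). intros x Hx.
    assert (Cx : 0 < x) by (assert (0 <= C / eps) by (apply Rdiv_le_0_compat; lra); lra).
    specialize (HC x). rewrite D0 in HC. rewrite Rminus_0_r.
    rewrite Rabs_mult, pow_1, Rabs_pos_eq in HC by lra.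
    assert (C < x * eps).
    { apply (Rmult_lt_reg_r (/eps)). apply Rinv_0_lt_compat; lra.
      replace (x * eps * / eps) with x by (field; lra). unfold Rdiv in Hx. lra. }
    nra.
  - destruct (HB 0%nat) as [C0 HC0]. destruct (HB 1%nat) as [C1 HC1].
    assert (Hc0 : forall x, continuous (D 0%nat) x).
    { intros x. apply (continuous_ext f); auto. }
    assert (Hc1 : forall x, continuous (D 1%nat) x) by (apply (cont_of_deriv _ (D 2%nat)); intros; apply HD).
    set (h := fun y => Rabs (D 0%nat y) + Rabs (D 1%nat y)).
    assert (Hh : forall x, continuous h x).
    { intros x. apply (continuous_plus (V:=R_NormedModule) (fun y => Rabs (D 0%nat y)) (fun y => Rabs (D 1%nat y))); apply contRabs; auto. }
    assert (HI : forall a b, RInt h a b = RInt (fun y => Rabs (D 0%nat y)) a b + RInt (fun y => Rabs (D 1%nat y)) a b).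
    { intros. apply RInt_add; apply contRabs; auto. }
    intros eps He.
    destruct (tail_pinf h (C0 + C1) Hh) with (eps := eps) as [M HM]; auto.
    { intros; unfold h; pose proof (Rabs_pos (D 0%nat x)); pose proof (Rabs_pos (D 1%nat x)); lra. }
    { intros a b Hab. rewrite HI.
      pose proof (int_abs_le_RInt _ _ HC0 Hc0 a b Hab).
      pose proof (int_abs_le_RInt _ _ HC1 Hc1 a b Hab). lra. }
    exists (M + 1). intros x Hx. rewrite Rminus_0_r, <- D0.
    pose proof (sup_bound (D 0%nat) (D 1%nat) (fun y => HD 0%nat y) Hc1 x).
    rewrite <- HI in H. specialize (HM (x - 1) x ltac:(lra)). lra.
Qed.


Lemma surj f s : (forall x, continuous f x) -> lim_pinf (fun x => f x - x) s ->
  forall X y, f X <= y -> exists x, X <= x /\ f x = y.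
Proof.
  intros Hc Hl X y Hy.
  destruct (Hl 1 ltac:(lra)) as [M HM].
  set (xh := Rmax (Rmax X M) (y - s + 1)).
  assert (H1 : Rmax X M <= xh) by apply Rmax_l. assert (H2 : y - s + 1 <= xh) by apply Rmax_r.
  pose proof (Rmax_l X M). pose proof (Rmax_r X M).
  specialize (HM xh ltac:(lra)). apply Rabs_def2 in HM.
  destruct (IVT_gen f X xh y) as [x [Hx Hfx]].
  { intros z. apply cont_pt_of. auto. }
  { unfold Rmin, Rmax. destruct (Rle_dec (f X) (f xh)); lra. }
  exists x. split; auto. unfold Rmin in Hx. destruct (Rle_dec X xh); lra.
Qed.

Lemma surj_all f s : (forall x, continuous f x) -> lim_pinf (fun x => f x - x) s ->
  (forall eps, eps > 0 -> exists M, forall x, x <= M -> Rabs (f x - x) < eps) ->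
  forall y, exists x, f x = y.
Proof.
  intros Hc Hl Hm y. destruct (Hm 1 ltac:(lra)) as [M HM].
  set (X := Rmin M (y - 1)). pose proof (Rmin_l M (y-1)). pose proof (Rmin_r M (y-1)).
  specialize (HM X ltac:(unfold X; lra)). apply Rabs_def2 in HM.
  destruct (surj f s Hc Hl X y) as [x [_ Hx]]. unfold X in *; lra. eauto.
Qed.


Definition vanish (f : R -> R) := forall eps, eps > 0 -> exists M, forall x, x <= M -> Rabs (f x) < eps.

Lemma lin_bound a b u v eps : Rabs u < eps / (Rabs a + Rabs b + 1) -> Rabs v < eps / (Rabs a + Rabs b + 1) ->
  eps > 0 -> Rabs (a * u + b * v) < eps.
Proof.
  intros Hu Hv He. set (e := eps / (Rabs a + Rabs b + 1)) in *.
  assert (Hpos : 0 < Rabs a + Rabs b + 1) by (pose proof (Rabs_pos a); pose proof (Rabs_pos b); lra).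
  assert (Ee : e * (Rabs a + Rabs b + 1) = eps) by (unfold e; field; lra).
  eapply Rle_lt_trans; [apply Rabs_triang|]. rewrite !Rabs_mult.
  pose proof (Rabs_pos a); pose proof (Rabs_pos b); pose proof (Rabs_pos u); pose proof (Rabs_pos v).
  assert (Rabs a * Rabs u <= Rabs a * e) by (apply Rmult_le_compat_l; lra).
  assert (Rabs b * Rabs v <= Rabs b * e) by (apply Rmult_le_compat_l; lra).
  assert (0 < e) by (rewrite <- Ee in He; nra).
  nra.
Qed.

Lemma lin_eps a b eps : eps > 0 -> eps / (Rabs a + Rabs b + 1) > 0.
Proof. intros. apply Rdiv_lt_0_compat; auto. pose proof (Rabs_pos a); pose proof (Rabs_pos b); lra. Qed.

Lemma vanish_lin f g a b : vanish f -> vanish g -> vanish (fun x => a * f x + b * g x).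
Proof.
  intros Hf Hg eps He.
  destruct (Hf _ (lin_eps a b eps He)) as [M1 H1]. destruct (Hg _ (lin_eps a b eps He)) as [M2 H2].
  exists (Rmin M1 M2). intros x Hx. apply lin_bound; auto.
  apply H1; pose proof (Rmin_l M1 M2); lra. apply H2; pose proof (Rmin_r M1 M2); lra.
Qed.

Lemma vanish_ext f g : (forall x, f x = g x) -> vanish f -> vanish g.
Proof. intros E H eps He. destruct (H eps He) as [M HM]. exists M. intros; rewrite <- E; auto. Qed.

Lemma lim_lin f g a b l1 l2 : lim_pinf f l1 -> lim_pinf g l2 ->
  lim_pinf (fun x => a * f x + b * g x) (a * l1 + b * l2).
Proof.
  intros Hf Hg eps He.
  destruct (Hf _ (lin_eps a b eps He)) as [M1 H1]. destruct (Hg _ (lin_eps a b eps He)) as [M2 H2].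
  exists (Rmax M1 M2). intros x Hx.
  replace (a * f x + b * g x - (a * l1 + b * l2)) with (a * (f x - l1) + b * (g x - l2)) by ring.
  apply lin_bound; auto.
  apply H1; pose proof (Rmax_l M1 M2); lra. apply H2; pose proof (Rmax_r M1 M2); lra.
Qed.

Lemma lim_ext f g l : (forall x, f x = g x) -> lim_pinf f l -> lim_pinf g l.
Proof. intros E H eps He. destruct (H eps He) as [M HM]. exists M. intros; rewrite <- E; auto. Qed.

Lemma lim_ev_ext f g l X : (forall x, x >= X -> f x = g x) -> lim_pinf f l -> lim_pinf g l.
Proof. intros E H eps He. destruct (H eps He) as [M HM]. exists (Rmax M X). intros x Hx.
  pose proof (Rmax_l M X); pose proof (Rmax_r M X). rewrite <- E by lra. apply HM; lra. Qed.

Lemma lim_unique f l1 l2 : lim_pinf f l1 -> lim_pinf f l2 -> l1 = l2.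
Proof.
  intros H1 H2. apply Rminus_diag_uniq. apply small_zero. intros eps He.
  destruct (H1 (eps/2) ltac:(lra)) as [M1 HM1]. destruct (H2 (eps/2) ltac:(lra)) as [M2 HM2].
  set (x := Rmax M1 M2). pose proof (Rmax_l M1 M2); pose proof (Rmax_r M1 M2).
  specialize (HM1 x ltac:(unfold x; lra)). specialize (HM2 x ltac:(unfold x; lra)).
  replace (l1 - l2) with (- (f x - l1) + (f x - l2)) by ring.
  eapply Rle_lt_trans; [apply Rabs_triang|]. rewrite Rabs_Ropp. lra.
Qed.

Lemma lim_comp u l p : lim_pinf u l -> (forall M, exists X, forall x, x >= X -> p x >= M) ->
  lim_pinf (fun x => u (p x)) l.
Proof.
  intros Hu Hp eps He. destruct (Hu eps He) as [M HM]. destruct (Hp M) as [X HX].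
  exists X. intros x Hx. apply HM. auto.
Qed.

Lemma shift_to_inf f s : lim_pinf (fun x => f x - x) s -> forall M, exists X, forall x, x >= X -> f x >= M.
Proof.
  intros H M. destruct (H 1 ltac:(lra)) as [M1 HM1]. exists (Rmax M1 (M - s + 1)).
  intros x Hx. pose proof (Rmax_l M1 (M - s + 1)); pose proof (Rmax_r M1 (M - s + 1)).
  specialize (HM1 x ltac:(lra)). apply Rabs_def2 in HM1. lra.
Qed.

Lemma vanish_to_minf f : vanish (fun x => f x - x) -> forall M, exists Y, forall y, y <= Y -> f y <= M.
Proof.
  intros H M. destruct (H 1 ltac:(lra)) as [M1 HM1]. exists (Rmin M1 (M - 1)).
  intros y Hy. pose proof (Rmin_l M1 (M - 1)); pose proof (Rmin_r M1 (M - 1)).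
  specialize (HM1 y ltac:(lra)). apply Rabs_def2 in HM1. lra.
Qed.

Lemma zero_of_deriv H : (forall x, derivable_pt_lim H x 0) -> vanish H -> forall x, H x = 0.
Proof.
  intros Hd Hv x. apply small_zero. intros eps He. destruct (Hv eps He) as [M HM].
  rewrite (null_all H Hd x (Rmin M x)). apply HM. apply Rmin_l.
Qed.

Lemma mono_of_deriv Q q : (forall x, derivable_pt_lim Q x (q x)) -> (forall x, 0 <= q x) ->
  forall y x, y <= x -> Q y <= Q x.
Proof.
  intros Hd Hq y x Hyx.
  destruct (MVT_gen Q y x q) as [c [_ Hc]].
  - intros; apply is_derive_Reals; auto.
  - intros; apply derivable_continuous_pt; eexists; apply Hd.
  - specialize (Hq c). nra.
Qed.

Lemma dlim_ext_loc f g t l r : 0 < r -> (forall s, Rabs (s - t) < r -> f s = g s) ->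
  derivable_pt_lim f t l -> derivable_pt_lim g t l.
Proof.
  intros Hr E H eps He. destruct (H eps He) as [d Hd].
  assert (Hm : 0 < Rmin d r) by (apply Rmin_glb_lt; [apply cond_pos|auto]).
  exists (mkposreal _ Hm). simpl. intros h Hh Hhd.
  assert (Rabs h < d) by (eapply Rlt_le_trans; [exact Hhd|apply Rmin_l]).
  assert (Rabs h < r) by (eapply Rlt_le_trans; [exact Hhd|apply Rmin_r]).
  rewrite <- !E. auto.
  rewrite Rminus_diag, Rabs_R0; auto.
  replace (t + h - t) with h by ring; auto.
Qed.

Lemma dlim_quad p q r t : derivable_pt_lim (fun s => p + s * q + s ^ 2 * r) t (q + 2 * t * r).
Proof.
  apply is_derive_Reals. auto_derive; auto. ring.
Qed.


Lemma dlim_lin2 f g a b x lf lg : derivable_pt_lim f x lf -> derivable_pt_lim g x lg ->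
  derivable_pt_lim (fun y => a * f y + b * g y) x (a * lf + b * lg).
Proof.
  intros Hf Hg.
  assert (H := derivable_pt_lim_plus _ _ x _ _ (derivable_pt_lim_scal f a x _ Hf) (derivable_pt_lim_scal g b x _ Hg)).
  exact H.
Qed.

Lemma geo_basic A (J : R -> Prop) phi (C : nat -> R -> nat -> R -> R) :
  (forall t, J t -> inDiffA1 A (phi t)) ->
  (forall t x, J t -> derivable_pt_lim (phi t) x (1 + C 0%nat t 0%nat x)) ->
  forall t, J t -> vanish (fun x => phi t x - x) /\ (forall x, 0 < 1 + C 0%nat t 0%nat x) /\
     (forall x, continuous (phi t) x).
Proof.
  intros HD Hd t Jt. destruct (HD t Jt) as [f [Hf [Hphi Hl]]]. split; [|split].
  - apply (vanish_ext f). intros x; rewrite Hphi; ring. exact (A1_minf A f Hf).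
  - intros x. destruct (Hl x) as [l [Hfl Hl1]].
    assert (E : 1 + C 0%nat t 0%nat x = 1 + l).
    { apply (uniqueness_limite (phi t) x); auto.
      apply (dlim_ext (fun y => y + f y)). intros; rewrite Hphi; auto.
      apply (derivable_pt_lim_plus (fun y => y) f x 1 l); auto. apply derivable_pt_lim_id. }
    lra.
  - apply (cont_of_deriv _ (fun x => 1 + C 0%nat t 0%nat x)). intros; apply Hd; auto.
Qed.

Lemma open_deriv (alpha beta : R) f t l : alpha < t < beta ->
  deriv_in (fun t => alpha < t < beta) f t l -> derivable_pt_lim f t l.
Proof.
  intros Ht H. apply (deriv_in_int (fun t => alpha < t < beta) f t l (Rmin (t - alpha) (beta - t))); auto.
  apply Rmin_glb_lt; lra.
  intros s Hs. pose proof (Rmin_l (t - alpha) (beta - t)). pose proof (Rmin_r (t - alpha) (beta - t)).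
  apply Rabs_def2 in Hs. lra.
Qed.


Lemma part1_poly A alpha beta phi : alpha < 0 < beta ->
  is_geodesic A (fun t => alpha < t < beta) phi ->
  exists P Q w0 k : R -> R,
    (forall t x, alpha < t < beta -> phi t x = phi 0 x + t * P x + t ^ 2 * Q x) /\
    (forall x, derivable_pt_lim P x (2 * w0 x * k x)) /\
    (forall x, derivable_pt_lim Q x (k x ^ 2)) /\
    (forall x, derivable_pt_lim (phi 0) x (w0 x ^ 2)) /\
    (forall x, 0 < w0 x) /\ vanish P /\ vanish Q /\
    vanish (fun x => phi 0 x - x) /\ (forall x, continuous (phi 0) x).
Proof.
  intros Hab [C [Hsm [HD [Hd Hgeo]]]].
  set (J := fun t => alpha < t < beta).
  assert (J0 : J 0) by (unfold J; lra).
  assert (GB := geo_basic A J phi C HD Hd).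
  set (t1 := beta / 2). set (t2 := alpha / 2).
  assert (J1 : J t1) by (unfold J, t1; lra). assert (J2 : J t2) by (unfold J, t2; lra).
  set (w0 := fun x => sqrt (1 + C 0%nat 0 0%nat x)).
  set (k := fun x => (sqrt (1 + C 0%nat t1 0%nat x) - w0 x) / t1).
  assert (Hw : forall t x, J t -> sqrt (1 + C 0%nat t 0%nat x) = w0 x + t * k x).
  { intros t x Jt.
    destruct (ode alpha beta (fun s => C 0%nat s 0%nat x) (fun s => C 1%nat s 0%nat x) (fun s => C 2%nat s 0%nat x))
      with (t0 := 0) as [kk Hkk].
    - intros s Hs. apply (open_deriv alpha beta); auto. apply (curve_pt A J C Hsm 0%nat s x Hs).
    - intros s Hs. apply (open_deriv alpha beta); auto. apply (curve_pt A J C Hsm 1%nat s x Hs).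
    - intros s Hs. apply Hgeo. exact Hs.
    - intros s Hs. apply (GB s Hs).
    - lra.
    - assert (E1 := Hkk t1 J1). assert (Et := Hkk t Jt).
      unfold k, w0. rewrite Et, E1. unfold t1. field. lra. }
  assert (Hw2 : forall t x, J t -> 1 + C 0%nat t 0%nat x = (w0 x + t * k x) ^ 2).
  { intros t x Jt. rewrite <- Hw by auto. simpl. rewrite Rmult_1_r. symmetry. apply sqrt_sqrt.
    destruct (GB t Jt) as [_ [H _]]. specialize (H x). lra. }
  assert (HE0 : forall x, 1 + C 0%nat 0 0%nat x = w0 x ^ 2).
  { intros x. rewrite (Hw2 0 x J0). f_equal. ring. }
  set (D := fun t x => 1 * phi t x + (-1) * phi 0 x).
  assert (HDd : forall t x, J t -> derivable_pt_lim (D t) x ((w0 x + t * k x) ^ 2 - w0 x ^ 2)).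
  { intros t x Jt. unfold D. replace ((w0 x + t * k x) ^ 2 - w0 x ^ 2) with
       (1 * (1 + C 0%nat t 0%nat x) + (-1) * (1 + C 0%nat 0 0%nat x)) by (rewrite Hw2, HE0; auto; ring).
    apply dlim_lin2; apply Hd; auto. }
  assert (HDv : forall t, J t -> vanish (D t)).
  { intros t Jt. apply (vanish_ext (fun x => 1 * (phi t x - x) + (-1) * (phi 0 x - x))).
    intros; unfold D; ring. apply vanish_lin; [apply (GB t Jt)| apply (GB 0 J0)]. }
  set (det := t1 * t2 ^ 2 - t2 * t1 ^ 2).
  assert (Hdet : det <> 0).
  { unfold det, t1, t2. replace (beta / 2 * (alpha / 2) ^ 2 - alpha / 2 * (beta / 2) ^ 2) with
       (alpha * beta * (alpha - beta) / 8) by field.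
    assert (alpha * beta < 0) by nra. assert (alpha - beta < 0) by lra.
    assert (alpha * beta * (alpha - beta) > 0) by nra. lra. }
  set (c1 := t2 ^ 2 / det). set (c2 := - t1 ^ 2 / det).
  set (c3 := - t2 / det). set (c4 := t1 / det).
  set (P := fun x => c1 * D t1 x + c2 * D t2 x).
  set (Q := fun x => c3 * D t1 x + c4 * D t2 x).
  assert (HP : forall x, derivable_pt_lim P x (2 * w0 x * k x)).
  { intros x. unfold P.
    match goal with |- derivable_pt_lim _ _ ?L => replace L with
      (c1 * ((w0 x + t1 * k x) ^ 2 - w0 x ^ 2) + c2 * ((w0 x + t2 * k x) ^ 2 - w0 x ^ 2)) end.
    apply dlim_lin2; apply HDd; auto.
    unfold c1, c2. fold det. field_simplify_eq; auto. unfold det. ring. }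
  assert (HQ : forall x, derivable_pt_lim Q x (k x ^ 2)).
  { intros x. unfold Q.
    match goal with |- derivable_pt_lim _ _ ?L => replace L with
      (c3 * ((w0 x + t1 * k x) ^ 2 - w0 x ^ 2) + c4 * ((w0 x + t2 * k x) ^ 2 - w0 x ^ 2)) end.
    apply dlim_lin2; apply HDd; auto.
    unfold c3, c4. field_simplify_eq; auto. unfold det. ring. }
  assert (HPv : vanish P) by (apply vanish_lin; apply HDv; auto).
  assert (HQv : vanish Q) by (apply vanish_lin; apply HDv; auto).
  exists P, Q, w0, k. split; [|split; [|split; [|split; [|split; [|split; [|split]]]]]]; auto.
  - intros t x Jt.
    set (H := fun y => 1 * D t y + (- t) * P y + (- t ^ 2) * Q y).
    assert (HH : forall y, derivable_pt_lim H y 0).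
    { intros y. unfold H.
      replace 0 with (1 * ((w0 y + t * k y) ^ 2 - w0 y ^ 2) + (- t) * (2 * w0 y * k y) + (- t ^ 2) * (k y ^ 2)) by ring.
      apply (derivable_pt_lim_plus _ _ y _ _ (dlim_lin2 _ _ 1 (-t) y _ _ (HDd t y Jt) (HP y))
              (derivable_pt_lim_scal _ _ y _ (HQ y))). }
    assert (Hv : vanish H).
    { apply (vanish_ext (fun y => 1 * (1 * D t y + (- t) * P y) + (- t ^ 2) * Q y)).
      intros; unfold H; ring. apply vanish_lin; auto. apply vanish_lin; auto. }
    assert (E := zero_of_deriv H HH Hv x). unfold H, D in E. lra.
  - intros x. replace (w0 x ^ 2) with (1 + C 0%nat 0 0%nat x) by auto. apply Hd; auto.
  - intros x. unfold w0. apply sqrt_lt_R0. apply (GB 0 J0).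
  - split; apply (GB 0 J0).
Qed.


Lemma cont_sq g : (forall x, continuous g x) -> forall x, @continuous R_UniformSpace R_UniformSpace (fun z => g z ^ 2) x.
Proof.
  intros H x. apply (continuous_comp g (fun v => v ^ 2)); auto.
  apply (ex_derive_continuous (K:=R_AbsRing) (V:=R_NormedModule)). auto_derive; auto.
Qed.

Lemma quad_roots S U E t1 t2 t3 : S + t1 * U + t1 ^ 2 / 4 * E = 0 ->
  S + t2 * U + t2 ^ 2 / 4 * E = 0 -> S + t3 * U + t3 ^ 2 / 4 * E = 0 ->
  t1 <> t2 -> t1 <> t3 -> t2 <> t3 -> E = 0.
Proof.
  intros H1 H2 H3 n12 n13 n23.
  assert (E12 : (t1 - t2) * (U + (t1 + t2) / 4 * E) = 0).
  { replace ((t1 - t2) * (U + (t1 + t2) / 4 * E)) with ((S + t1 * U + t1 ^ 2 / 4 * E) - (S + t2 * U + t2 ^ 2 / 4 * E)) by field. lra. }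
  assert (E13 : (t1 - t3) * (U + (t1 + t3) / 4 * E) = 0).
  { replace ((t1 - t3) * (U + (t1 + t3) / 4 * E)) with ((S + t1 * U + t1 ^ 2 / 4 * E) - (S + t3 * U + t3 ^ 2 / 4 * E)) by field. lra. }
  apply Rmult_integral in E12. apply Rmult_integral in E13.
  destruct E12 as [E12|E12]; [lra|]. destruct E13 as [E13|E13]; [lra|].
  assert (E23 : (t2 - t3) * E = 0) by lra.
  apply Rmult_integral in E23. destruct E23; [lra|auto].
Qed.


Lemma sqrt_diff_bound a b : 0 <= a -> 0 < b -> Rabs (sqrt a - sqrt b) * sqrt b <= Rabs (a - b).
Proof.
  intros Ha Hb.
  assert (Sa : 0 <= sqrt a) by apply sqrt_pos. assert (Sb : 0 < sqrt b) by (apply sqrt_lt_R0; auto).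
  assert (E : a - b = (sqrt a - sqrt b) * (sqrt a + sqrt b)).
  { rewrite <- (sqrt_sqrt a) at 1 by lra. rewrite <- (sqrt_sqrt b) at 1 by lra. ring. }
  rewrite E, Rabs_mult. rewrite (Rabs_pos_eq (sqrt a + sqrt b)) by lra.
  pose proof (Rabs_pos (sqrt a - sqrt b)). nra.
Qed.

Lemma endpoint_ext c l m kk t0 : 0 <= t0 <= 1 ->
  deriv_in (fun t => 0 <= t <= 1) c t0 l ->
  (forall t, 0 < t < 1 -> 0 <= 1 + c t) -> 0 < 1 + c t0 ->
  (forall t, 0 < t < 1 -> sqrt (1 + c t) = m + (t - 1/2) * kk) ->
  sqrt (1 + c t0) = m + (t0 - 1/2) * kk.
Proof.
  intros Ht0 Hd Hpos Hpos0 Haff. apply Rminus_diag_uniq. apply small_zero. intros eps He.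
  assert (Sb : 0 < sqrt (1 + c t0)) by (apply sqrt_lt_R0; auto).
  destruct (deriv_in_cont _ c t0 l Hd (eps / 2 * sqrt (1 + c t0))) as [d [Hd0 Hc]].
  { apply Rmult_lt_0_compat; lra. }
  assert (Hk : 0 < Rabs kk + 1) by (pose proof (Rabs_pos kk); lra).
  set (lam := Rmin (Rmin 1 d) (eps / (Rabs kk + 1)) / 2).
  assert (Hlam : 0 < lam /\ lam <= 1 /\ lam < d /\ lam < eps / (Rabs kk + 1)).
  { assert (0 < eps / (Rabs kk + 1)) by (apply Rdiv_lt_0_compat; lra).
    pose proof (Rmin_l (Rmin 1 d) (eps / (Rabs kk + 1))). pose proof (Rmin_r (Rmin 1 d) (eps / (Rabs kk + 1))).
    pose proof (Rmin_l 1 d). pose proof (Rmin_r 1 d).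
    assert (0 < Rmin (Rmin 1 d) (eps / (Rabs kk + 1))).
    { apply Rmin_glb_lt; auto. apply Rmin_glb_lt; lra. }
    unfold lam. lra. }
  destruct Hlam as [L1 [L2 [L3 L4]]].
  set (h := lam * (1/2 - t0)).
  assert (Hh : Rabs h <= lam / 2).
  { unfold h. rewrite Rabs_mult, Rabs_pos_eq by lra. apply Rabs_le_between' in Ht0 || idtac.
    assert (Rabs (1/2 - t0) <= 1/2) by (apply Rabs_le; lra). nra. }
  assert (Hs : 0 < t0 + h < 1).
  { unfold h. destruct (Rle_dec t0 (1/2)); nra. }
  specialize (Hc h ltac:(lra) ltac:(lra)).
  assert (B1 := sqrt_diff_bound (1 + c (t0 + h)) (1 + c t0) (Hpos _ Hs) Hpos0).
  replace (1 + c (t0 + h) - (1 + c t0)) with (c (t0 + h) - c t0) in B1 by ring.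
  assert (B2 : Rabs (sqrt (1 + c (t0 + h)) - sqrt (1 + c t0)) < eps / 2).
  { apply (Rmult_lt_reg_r (sqrt (1 + c t0))); auto. lra. }
  rewrite (Haff _ Hs) in B2.
  assert (B3 : Rabs (h * kk) < eps / 2).
  { rewrite Rabs_mult. pose proof (Rabs_pos kk). pose proof (Rabs_pos h).
    assert (lam * (Rabs kk + 1) < eps).
    { apply (Rmult_lt_compat_r (Rabs kk + 1)) in L4; auto. unfold Rdiv in L4.
      rewrite Rmult_assoc, Rinv_l in L4; lra. }
    nra. }
  replace (sqrt (1 + c t0) - (m + (t0 - 1 / 2) * kk)) with
    (- (m + (t0 + h - 1 / 2) * kk - sqrt (1 + c t0)) + h * kk) by ring.
  eapply Rle_lt_trans; [apply Rabs_triang|]. rewrite Rabs_Ropp. lra.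
Qed.


Lemma part1 (A : Aclass) :
  (forall (alpha beta : R) (phi : R -> R -> R) (u0 du0 : R -> R) (uinf E S0 : R),
     alpha < 0 < beta ->
     is_geodesic A (fun t => alpha < t < beta) phi ->
     inA1 A u0 ->
     (forall x, derivable_pt_lim u0 x (du0 x)) ->
     lim_pinf u0 uinf ->
     integral_R (fun x => (du0 x) ^ 2) E ->
     (forall x, deriv_in (fun t => alpha < t < beta) (fun s => phi s x) 0 (u0 (phi 0 x))) ->
     has_shift (phi 0) S0 ->
     forall u : R -> R -> R,
       (forall t x, alpha < t < beta ->
          deriv_in (fun t => alpha < t < beta) (fun s => phi s x) t (u t (phi t x))) ->
       (forall t, alpha < t < beta ->
          has_shift (phi t) (S0 + t * uinf + t ^ 2 / 4 * E) /\
          lim_pinf (u t) (uinf + t / 2 * E)) /\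
       ((exists x, u0 x <> 0) ->
          (forall t1 t2 t3,
             alpha < t1 < beta -> alpha < t2 < beta -> alpha < t3 < beta ->
             inDiffA A (phi t1) -> inDiffA A (phi t2) -> inDiffA A (phi t3) ->
             t1 = t2 \/ t1 = t3 \/ t2 = t3) /\
          (forall t1 t2,
             alpha < t1 < beta -> alpha < t2 < beta ->
             lim_pinf (u t1) 0 -> lim_pinf (u t2) 0 -> t1 = t2))).
Proof.
  intros alpha beta phi u0 du0 uinf E S0 Hab Hgeo Hu0 Hdu0 Hlim HE Hu0t HS0 u Hu.
  destruct (part1_poly A alpha beta phi Hab Hgeo) as
    [P [Q [w0 [k [Hpoly [HP [HQ [Hphi0 [Hw0 [HPv [HQv [Hv0 Hc0]]]]]]]]]]]].
  set (J := fun t => alpha < t < beta).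
  assert (J0 : J 0) by (unfold J; lra).
  assert (Hdt : forall t x l, J t -> deriv_in J (fun s => phi s x) t l -> l = P x + 2 * t * Q x).
  { intros t x l Jt Hl.
    apply (uniqueness_limite (fun s => phi 0 x + s * P x + s ^ 2 * Q x) t); [|apply dlim_quad].
    apply (dlim_ext_loc (fun s => phi s x) _ t l (Rmin (t - alpha) (beta - t))).
    - unfold J in Jt. apply Rmin_glb_lt; lra.
    - intros s Hs. apply Hpoly. pose proof (Rmin_l (t - alpha) (beta - t)).
      pose proof (Rmin_r (t - alpha) (beta - t)). apply Rabs_def2 in Hs. lra.
    - apply (open_deriv alpha beta); auto. }
  assert (HPu : forall x, P x = u0 (phi 0 x)).
  { intros x. rewrite (Hdt 0 x (u0 (phi 0 x)) J0 (Hu0t x)). ring. }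
  assert (Hk : forall x, k x = du0 (phi 0 x) * w0 x / 2).
  { intros x.
    assert (E1 : 2 * w0 x * k x = du0 (phi 0 x) * w0 x ^ 2).
    { apply (uniqueness_limite P x); auto.
      apply (dlim_ext (fun y => u0 (phi 0 y))). intros; auto.
      apply (derivable_pt_lim_comp (phi 0) u0 x); auto. }
    specialize (Hw0 x). apply (Rmult_eq_reg_l (2 * w0 x)); [|lra].
    rewrite E1. field. }
  assert (Hdc : forall x, continuous du0 x) by (apply (A1_dcont A u0 du0 Hu0 Hdu0)).
  assert (Hdc2 := cont_sq du0 Hdc).
  set (F := fun y => RInt (fun z => du0 z ^ 2) 0 y).
  assert (HF : forall y, derivable_pt_lim F y (du0 y ^ 2)).
  { intros y. apply is_derive_Reals. apply (is_derive_RInt (fun z => du0 z ^ 2) F 0 y); auto.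
    apply filter_forall. intros b. apply (RInt_correct (V:=R_CompleteNormedModule)).
    apply exRInt_cont; auto. }
  assert (HQF : forall x y, Q x - Q y = / 4 * RInt (fun z => du0 z ^ 2) (phi 0 y) (phi 0 x)).
  { intros x y.
    set (G := fun x => 1 * Q x + (- / 4) * F (phi 0 x)).
    assert (HG : forall x, derivable_pt_lim G x 0).
    { intros z. unfold G.
      pose proof (dlim_lin2 Q (fun x => F (phi 0 x)) 1 (-/4) z _ _ (HQ z)
         (derivable_pt_lim_comp (phi 0) F z _ _ (Hphi0 z) (HF _))) as H0.
      assert (Eq : 1 * (k z ^ 2) + (- / 4) * (du0 (phi 0 z) ^ 2 * w0 z ^ 2) = 0) by (rewrite Hk; field).
      rewrite Eq in H0. exact H0. }
    assert (EG := null_all G HG x y). unfold G in EG.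
    pose proof (RInt_Chasles' (fun z => du0 z ^ 2) 0 (phi 0 y) (phi 0 x) Hdc2) as Ch.
    change (RInt (fun z : R => du0 z ^ 2) 0 (phi 0 x) - RInt (fun z : R => du0 z ^2) 0 (phi 0 y) = RInt (fun z : R => du0 z ^ 2) (phi 0 y) (phi 0 x)) in Ch.
    unfold F in EG. lra. }
  assert (HQl : lim_pinf Q (E / 4)).
  { intros eps He.
    destruct (HE eps He) as [M [HM HMab]].
    destruct (HQv (eps / 2) ltac:(lra)) as [My HMy].
    destruct (vanish_to_minf (phi 0) Hv0 (- M)) as [Y HY].
    destruct (shift_to_inf (phi 0) S0 HS0 M) as [X HX].
    exists X. intros x Hx.
    set (y := Rmin My Y). pose proof (Rmin_l My Y). pose proof (Rmin_r My Y).
    destruct (HMab (phi 0 y) (phi 0 x)) as [pr Hpr].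
    { apply HY. unfold y; lra. }
    { specialize (HX x Hx). lra. }
    rewrite RInt_of_pr in Hpr.
    specialize (HMy y ltac:(unfold y; lra)).
    pose proof (HQF x y).
    replace (Q x - E / 4) with (Q y + / 4 * (RInt (fun z => du0 z ^ 2) (phi 0 y) (phi 0 x) - E)) by lra.
    eapply Rle_lt_trans; [apply Rabs_triang|]. rewrite Rabs_mult.
    rewrite (Rabs_pos_eq (/4)) by lra. lra. }
  assert (HPl : lim_pinf P uinf).
  { apply (lim_ext (fun x => u0 (phi 0 x))). intros; auto.
    apply lim_comp; auto. apply (shift_to_inf (phi 0) S0 HS0). }
  assert (Hshift : forall t, J t -> has_shift (phi t) (S0 + t * uinf + t ^ 2 / 4 * E)).
  { intros t Jt. unfold has_shift.
    apply (lim_ext (fun x => 1 * (1 * (phi 0 x - x) + t * P x) + t ^ 2 * Q x)).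
    { intros x. rewrite (Hpoly t x Jt). ring. }
    replace (S0 + t * uinf + t ^ 2 / 4 * E) with (1 * (1 * S0 + t * uinf) + t ^ 2 * (E / 4)) by field.
    apply lim_lin; auto. apply lim_lin; auto. }
  destruct Hgeo as [C [Hsm [HD [Hd Hgeq]]]].
  assert (GB := geo_basic A J phi C HD Hd).
  assert (HEnz : (exists x, u0 x <> 0) -> E <> 0).
  { intros [x0 Hx0] HE0.
    assert (Hmono : forall y x, y <= x -> Q y <= Q x).
    { apply (mono_of_deriv Q (fun x => k x ^ 2)); auto. intros; apply pow2_ge_0. }
    assert (HQ0 : forall x, Q x = 0).
    { intros x. apply small_zero. intros eps He.
      destruct (HQv eps He) as [M1 HM1]. destruct (HQl eps He) as [M2 HM2].
      pose proof (Rmin_l M1 x). pose proof (Rmin_r M1 x). pose proof (Rmax_l M2 x). pose proof (Rmax_r M2 x).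
      specialize (HM1 (Rmin M1 x) ltac:(lra)). specialize (HM2 (Rmax M2 x) ltac:(lra)).
      rewrite HE0 in HM2. replace (0/4) with 0 in HM2 by field. rewrite Rminus_0_r in HM2.
      pose proof (Hmono (Rmin M1 x) x ltac:(lra)). pose proof (Hmono x (Rmax M2 x) ltac:(lra)).
      apply Rabs_def2 in HM1. apply Rabs_def2 in HM2. apply Rabs_def1; lra. }
    assert (Hdu0z : forall x, du0 (phi 0 x) = 0).
    { intros x.
      assert (Hk0 : k x ^ 2 = 0).
      { apply (uniqueness_limite Q x); auto. apply (dlim_ext (fun _ => 0)); auto.
        apply derivable_pt_lim_const. }
      rewrite Hk in Hk0. specialize (Hw0 x).
      assert (du0 (phi 0 x) * w0 x / 2 = 0) by nra.
      apply Rmult_integral in H. destruct H as [H|H]; [|lra].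
      apply Rmult_integral in H. destruct H; [auto|lra]. }
    assert (Hdz : forall y, du0 y = 0).
    { intros y. destruct (surj_all (phi 0) S0 Hc0 HS0 Hv0 y) as [x <-]. auto. }
    assert (Hcst : forall y, u0 y = u0 x0).
    { intros y. apply null_all. intros z. rewrite <- (Hdz z). auto. }
    apply Hx0. apply small_zero. intros eps He.
    destruct (A1_minf A u0 Hu0 eps He) as [M HM]. rewrite <- (Hcst M). apply HM. lra. }
  assert (Hpart : forall t, J t -> has_shift (phi t) (S0 + t * uinf + t ^ 2 / 4 * E) /\
          lim_pinf (u t) (uinf + t / 2 * E)).
  { intros t Jt. split; [apply Hshift; auto|].
    intros eps He.
    assert (HL : lim_pinf (fun x => 1 * P x + (2 * t) * Q x) (1 * uinf + 2 * t * (E / 4))).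
    { apply lim_lin; auto. }
    destruct (HL eps He) as [X HX].
    exists (phi t X). intros y Hy.
    destruct (GB t Jt) as [Hvt [_ Hct]].
    destruct (surj (phi t) _ Hct (Hshift t Jt) X y ltac:(lra)) as [x [Hx <-]].
    rewrite (Hdt t x (u t (phi t x)) Jt (Hu t x Jt)).
    replace (uinf + t / 2 * E) with (1 * uinf + 2 * t * (E / 4)) by field.
    replace (P x + 2 * t * Q x) with (1 * P x + 2 * t * Q x) by ring. apply HX. lra. }
  split; [exact Hpart|].
  - intros Hnz. specialize (HEnz Hnz). split.
    + intros t1 t2 t3 J1 J2 J3 D1 D2 D3.
      assert (Z : forall t, J t -> inDiffA A (phi t) -> S0 + t * uinf + t ^ 2 / 4 * E = 0).
      { intros t Jt [f [Hf [Hpf _]]].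
        apply (lim_unique (fun x => phi t x - x)). apply Hshift; auto.
        apply (lim_ext f). intros; rewrite Hpf; ring. apply (A_pinf A f Hf). }
      destruct (Req_dec t1 t2); auto. destruct (Req_dec t1 t3); auto. destruct (Req_dec t2 t3); auto.
      exfalso. apply HEnz. apply (quad_roots S0 uinf E t1 t2 t3); auto.
    + intros t1 t2 J1 J2 L1 L2.
      assert (Z : forall t, J t -> lim_pinf (u t) 0 -> uinf + t / 2 * E = 0).
      { intros t Jt Lt. symmetry. apply (lim_unique (u t)); auto. apply Hpart; auto. }
      assert (Z1 := Z t1 J1 L1). assert (Z2 := Z t2 J2 L2).
      assert (Z3 : (t1 - t2) * E = 0) by lra.
      apply Rmult_integral in Z3. destruct Z3; [lra|contradiction].
Qed.


Lemma part2 (A : Aclass) :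
  (forall (phi : R -> R -> R) (d0 d1 : R -> R) (N1 N2 : R),
     is_geodesic A (fun t => 0 <= t <= 1) phi ->
     inDiffA A (phi 0) -> inDiffA A (phi 1) ->
     (forall x, derivable_pt_lim (phi 0) x (d0 x)) ->
     (forall x, derivable_pt_lim (phi 1) x (d1 x)) ->
     integral_R (fun x => (Rmap (d0 x) - Rmap (d1 x)) ^ 2) N1 ->
     integral_R (fun x => (sqrt (d0 x) - sqrt (d1 x)) ^ 2) N2 ->
     forall t, 0 <= t <= 1 ->
       has_shift (phi t) ((t ^ 2 - t) / 4 * N1) /\
       has_shift (phi t) ((t ^ 2 - t) * N2)).
Proof.
  intros phi d0 d1 N1 N2 [C [Hsm [HD [Hd Hgeq]]]] HA0 HA1 Hd0 Hd1 HN1 HN2.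
  set (J := fun t => 0 <= t <= 1).
  assert (GB := geo_basic A J phi C HD Hd).
  assert (J0 : J 0) by (unfold J; lra). assert (J1 : J 1) by (unfold J; lra).
  assert (Jh : J (1/2)) by (unfold J; lra).
  set (a := fun x => sqrt (d0 x)). set (b := fun x => sqrt (d1 x)).
  assert (Ed0 : forall x, d0 x = 1 + C 0%nat 0 0%nat x) by (intros; apply (uniqueness_limite (phi 0) x); auto).
  assert (Ed1 : forall x, d1 x = 1 + C 0%nat 1 0%nat x) by (intros; apply (uniqueness_limite (phi 1) x); auto).
  assert (Haff : forall t x, J t -> sqrt (1 + C 0%nat t 0%nat x) = (1 - t) * a x + t * b x).
  { intros t x Jt.
    assert (Hint : forall s, 0 < s < 1 -> forall m, derivable_pt_lim (fun r => C m r 0%nat x) s (C (S m) s 0%nat x)).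
    { intros s Hs m. apply (deriv_in_int J _ s _ (Rmin s (1 - s))).
      apply Rmin_glb_lt; lra.
      intros r Hr. pose proof (Rmin_l s (1 - s)). pose proof (Rmin_r s (1 - s)). apply Rabs_def2 in Hr.
      unfold J; lra.
      apply (curve_pt A J C Hsm m s x). unfold J; lra. }
    destruct (ode 0 1 (fun s => C 0%nat s 0%nat x) (fun s => C 1%nat s 0%nat x) (fun s => C 2%nat s 0%nat x))
      with (t0 := 1/2) as [kk Hkk].
    - intros s Hs. apply (Hint s Hs 0%nat).
    - intros s Hs. apply (Hint s Hs 1%nat).
    - intros s Hs. apply Hgeq. unfold J; lra.
    - intros s Hs. apply (GB s). unfold J; lra.
    - lra.
    - set (m := sqrt (1 + C 0%nat (1/2) 0%nat x)) in *.
      assert (Hall : forall s, J s -> sqrt (1 + C 0%nat s 0%nat x) = m + (s - 1/2) * kk).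
      { intros s Js. apply (endpoint_ext (fun s => C 0%nat s 0%nat x) (C 1%nat s 0%nat x)); auto.
        - apply (curve_pt A J C Hsm 0%nat s x Js).
        - intros r Hr. left. apply (GB r). unfold J; lra.
        - apply (GB s Js). }
      unfold a, b. rewrite Ed0, Ed1. rewrite (Hall t Jt), (Hall 0 J0), (Hall 1 J1). ring. }
  assert (Hsq : forall t x, J t -> 1 + C 0%nat t 0%nat x = ((1 - t) * a x + t * b x) ^ 2).
  { intros t x Jt. rewrite <- Haff by auto. simpl. rewrite Rmult_1_r. symmetry. apply sqrt_sqrt.
    destruct (GB t Jt) as [_ [H _]]. specialize (H x). lra. }
  assert (Hda : forall t x, J t -> derivable_pt_lim (phi t) x (((1 - t) * a x + t * b x) ^ 2)).
  { intros t x Jt. rewrite <- Hsq by auto. apply Hd; auto. }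
  set (G := fun x => 1 * (2 * phi 0 x + 2 * phi 1 x) + (-4) * phi (1/2) x).
  assert (HG : forall x, derivable_pt_lim G x ((a x - b x) ^ 2)).
  { intros x. unfold G.
    pose proof (dlim_lin2 _ _ 1 (-4) x _ _ (dlim_lin2 _ _ 2 2 x _ _ (Hda 0 x J0) (Hda 1 x J1)) (Hda (1/2) x Jh)) as H.
    match type of H with derivable_pt_lim _ _ ?L => replace ((a x - b x) ^ 2) with L by field end. exact H. }
  assert (HGv : vanish G).
  { apply (vanish_ext (fun x => 1 * (2 * (phi 0 x - x) + 2 * (phi 1 x - x)) + (-4) * (phi (1/2) x - x))).
    intros; unfold G; ring.
    apply vanish_lin; [apply vanish_lin|]; apply GB; auto. }
  assert (Hrep : forall t x, J t -> phi t x - x = (1 - t) * (phi 0 x - x) + t * (phi 1 x - x) - t * (1 - t) * G x).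
  { intros t x Jt.
    set (H := fun y => 1 * (1 * phi t y + (-(1 - t)) * phi 0 y) + 1 * ((- t) * phi 1 y + (t * (1 - t)) * G y)).
    assert (HH : forall y, derivable_pt_lim H y 0).
    { intros y. unfold H.
      pose proof (dlim_lin2 _ _ 1 1 y _ _ (dlim_lin2 _ _ 1 (-(1-t)) y _ _ (Hda t y Jt) (Hda 0 y J0))
                   (dlim_lin2 _ _ (-t) (t * (1 - t)) y _ _ (Hda 1 y J1) (HG y))) as H0.
      match type of H0 with derivable_pt_lim _ _ ?L => assert (Eq : L = 0) by ring end.
      rewrite Eq in H0. exact H0. }
    assert (Hv : vanish H).
    { apply (vanish_ext (fun y => 1 * (1 * (phi t y - y) + (-(1 - t)) * (phi 0 y - y)) + 1 * ((- t) * (phi 1 y - y) + (t * (1 - t)) * G y))).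
      intros; unfold H; ring.
      apply vanish_lin; apply vanish_lin; auto; apply GB; auto. }
    assert (E := zero_of_deriv H HH Hv x). unfold H in E. lra. }
  assert (Hca : forall x, continuous (fun z => a z - b z) x).
  { intros x. apply (continuous_minus (V:=R_NormedModule) a b); unfold a, b; apply continuous_sqrt_comp.
    - apply (continuous_ext (fun z => 1 + C 0%nat 0 0%nat z)); [intros; symmetry; auto|].
      apply (cont_of_deriv _ (fun z => C 0%nat 0 (S 0%nat) z)). intros x0. cbv beta.
      replace (C 0%nat 0 1%nat x0) with (0 + C 0%nat 0 1%nat x0) by ring.
      apply (derivable_pt_lim_plus (fun _ => 1)). apply derivable_pt_lim_const.
      destruct Hsm as [Hs1 _]. destruct (Hs1 0%nat 0 J0) as [[_ Hder] _]. apply Hder.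
    - apply (continuous_ext (fun z => 1 + C 0%nat 1 0%nat z)); [intros; symmetry; auto|].
      apply (cont_of_deriv _ (fun z => C 0%nat 1 (S 0%nat) z)). intros x0. cbv beta.
      replace (C 0%nat 1 1%nat x0) with (0 + C 0%nat 1 1%nat x0) by ring.
      apply (derivable_pt_lim_plus (fun _ => 1)). apply derivable_pt_lim_const.
      destruct Hsm as [Hs1 _]. destruct (Hs1 0%nat 1 J1) as [[_ Hder] _]. apply Hder. }
  assert (Hci := cont_sq _ Hca).
  assert (HGI : forall x y, G x - G y = RInt (fun z => (sqrt (d0 z) - sqrt (d1 z)) ^ 2) y x).
  { intros x y. symmetry. apply is_RInt_unique. apply (is_RInt_derive G (fun z => (a z - b z) ^ 2)).
    - intros; apply is_derive_Reals; auto.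
    - intros; apply Hci. }
  assert (HGl : lim_pinf G N2).
  { intros eps He.
    destruct (HN2 (eps / 2) ltac:(lra)) as [M [HM HMab]].
    destruct (HGv (eps / 2) ltac:(lra)) as [My HMy].
    exists (Rmax M 0). intros x Hx.
    set (y := Rmin My (- M)). pose proof (Rmin_l My (-M)). pose proof (Rmin_r My (-M)).
    pose proof (Rmax_l M 0).
    destruct (HMab y x) as [pr Hpr]. unfold y; lra. lra.
    rewrite RInt_of_pr in Hpr. rewrite <- HGI in Hpr.
    specialize (HMy y ltac:(unfold y; lra)).
    replace (G x - N2) with (G y + (G x - G y - N2)) by ring.
    eapply Rle_lt_trans; [apply Rabs_triang|]. lra. }
  assert (HL0 : forall s, inDiffA A (phi s) -> lim_pinf (fun x => phi s x - x) 0).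
  { intros s [f [Hf [Hpf _]]]. apply (lim_ext f). intros; rewrite Hpf; ring. apply (A_pinf A f Hf). }
  assert (HN : N1 = 4 * N2).
  { apply Rminus_diag_uniq. apply small_zero. intros eps He.
    destruct (HN1 (eps / 5) ltac:(lra)) as [M1 [_ H1]].
    destruct (HN2 (eps / 5) ltac:(lra)) as [M2 [_ H2]].
    set (M := Rmax (Rabs M1) (Rabs M2)).
    pose proof (Rmax_l (Rabs M1) (Rabs M2)). pose proof (Rmax_r (Rabs M1) (Rabs M2)).
    pose proof (Rle_abs M1). pose proof (Rle_abs M2).
    destruct (H1 (- M) M) as [pr1 Hp1]. unfold M; lra. unfold M; lra.
    destruct (H2 (- M) M) as [pr2 Hp2]. unfold M; lra. unfold M; lra.
    rewrite RInt_of_pr in Hp1, Hp2.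
    assert (E : RInt (fun x => (Rmap (d0 x) - Rmap (d1 x)) ^ 2) (- M) M =
                4 * RInt (fun x => (sqrt (d0 x) - sqrt (d1 x)) ^ 2) (- M) M).
    { rewrite <- (RInt_scal (V:=R_CompleteNormedModule)).
      apply RInt_ext. intros; unfold Rmap, scal; simpl; unfold mult; simpl; ring.
      apply exRInt_cont. apply Hci. }
    rewrite E in Hp1.
    replace (N1 - 4 * N2) with (- (4 * RInt (fun x => (sqrt (d0 x) - sqrt (d1 x)) ^ 2) (- M) M - N1)
        + 4 * (RInt (fun x => (sqrt (d0 x) - sqrt (d1 x)) ^ 2) (- M) M - N2)) by ring.
    eapply Rle_lt_trans; [apply Rabs_triang|]. rewrite Rabs_Ropp, Rabs_mult, (Rabs_pos_eq 4) by lra. lra. }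
  intros t Jt.
  assert (Hs : has_shift (phi t) ((t ^ 2 - t) * N2)).
  { unfold has_shift.
    apply (lim_ext (fun x => 1 * ((1 - t) * (phi 0 x - x) + t * (phi 1 x - x)) + (- (t * (1 - t))) * G x)).
    { intros x. rewrite (Hrep t x Jt). ring. }
    replace ((t ^ 2 - t) * N2) with (1 * ((1 - t) * 0 + t * 0) + (- (t * (1 - t))) * N2) by ring.
    apply lim_lin; auto. apply lim_lin; auto. }
  split; auto. replace ((t ^ 2 - t) / 4 * N1) with ((t ^ 2 - t) * N2) by (rewrite HN; field). auto.
Qed.

Theorem mainTheorem8 (A : Aclass) :
  (forall (alpha beta : R) (phi : R -> R -> R) (u0 du0 : R -> R) (uinf E S0 : R),
     alpha < 0 < beta ->
     is_geodesic A (fun t => alpha < t < beta) phi ->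
     inA1 A u0 ->
     (forall x, derivable_pt_lim u0 x (du0 x)) ->
     lim_pinf u0 uinf ->
     integral_R (fun x => (du0 x) ^ 2) E ->
     (forall x, deriv_in (fun t => alpha < t < beta) (fun s => phi s x) 0 (u0 (phi 0 x))) ->
     has_shift (phi 0) S0 ->
     forall u : R -> R -> R,
       (forall t x, alpha < t < beta ->
          deriv_in (fun t => alpha < t < beta) (fun s => phi s x) t (u t (phi t x))) ->
       (forall t, alpha < t < beta ->
          has_shift (phi t) (S0 + t * uinf + t ^ 2 / 4 * E) /\
          lim_pinf (u t) (uinf + t / 2 * E)) /\
       ((exists x, u0 x <> 0) ->
          (forall t1 t2 t3,
             alpha < t1 < beta -> alpha < t2 < beta -> alpha < t3 < beta ->
             inDiffA A (phi t1) -> inDiffA A (phi t2) -> inDiffA A (phi t3) ->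
             t1 = t2 \/ t1 = t3 \/ t2 = t3) /\
          (forall t1 t2,
             alpha < t1 < beta -> alpha < t2 < beta ->
             lim_pinf (u t1) 0 -> lim_pinf (u t2) 0 -> t1 = t2))) /\
  (forall (phi : R -> R -> R) (d0 d1 : R -> R) (N1 N2 : R),
     is_geodesic A (fun t => 0 <= t <= 1) phi ->
     inDiffA A (phi 0) -> inDiffA A (phi 1) ->
     (forall x, derivable_pt_lim (phi 0) x (d0 x)) ->
     (forall x, derivable_pt_lim (phi 1) x (d1 x)) ->
     integral_R (fun x => (Rmap (d0 x) - Rmap (d1 x)) ^ 2) N1 ->
     integral_R (fun x => (sqrt (d0 x) - sqrt (d1 x)) ^ 2) N2 ->
     forall t, 0 <= t <= 1 ->
       has_shift (phi t) ((t ^ 2 - t) / 4 * N1) /\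
       has_shift (phi t) ((t ^ 2 - t) * N2)).
Proof.
  split; [apply part1|apply part2].
Qed.
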